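(* Let $P,R\in C^1(\mathbb{R},\mathrm{Sym}(n,\mathbb{R}))$, $Q\in C^1(\mathbb{R},\mathrm{Mat}(n,\mathbb{R}))$ satisfy (F2) with constants $C_1,C_2,C_3$. For $\lambda\in\mathbb{R}$ let $B_\lambda(t)=\begin{bmatrix}P^{-1}&-P^{-1}Q\\-Q^TP^{-1}&Q^TP^{-1}Q-R-\lambda I_n\end{bmatrix}(t)$, let $\gamma_{(\tau,\lambda)}$ be the solution of $\dot\gamma=JB_\lambda(t)\gamma$, $\gamma(\tau)=I_{2n}$, and set $E^s_\lambda(\tau)=\{v\in\mathbb{R}^{2n}:\lim_{t\to+\infty}\gamma_{(\tau,\lambda)}(t)v=0\}$, $E^u_\lambda(\tau)=\{v\in\mathbb{R}^{2n}:\lim_{t\to-\infty}\gamma_{(\tau,\lambda)}(t)v=0\}$. Then $E^u_\lambda(-\tau)\cap E^s_\lambda(\tau)=\{0\}$ for all $\tau\ge0$ and all $\lambda\ge\frac{2C_2^2}{C_1}+C_3$.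
   Context: (F2): the limits of $P,Q,R$ as $t\to\pm\infty$ exist and $\langle P(t)v,v\rangle\ge C_1|v|^2$, $|P(t)v|\ge C_1|v|$, $|Q(t)v|\le C_2|v|$, $|R(t)v|\le C_3|v|$ for all $t,v$. $J=\begin{bmatrix}0&-I_n\\ I_n&0\end{bmatrix}$. *)

(* Defs.v *)
From HB Require Import structures.
From mathcomp Require Import all_boot all_order all_algebra.
From mathcomp Require Import all_classical all_reals all_analysis.
Set Implicit Arguments. Unset Strict Implicit. Unset Printing Implicit Defensive.
Import Order.TTheory GRing.Theory Num.Theory.
Import numFieldNormedType.Exports.
Local Open Scope ring_scope.
Local Open Scope classical_set_scope.

Definition symmx {R : realType} {n : nat} (A : 'M[R]_n) : Prop := A^T = A.
Definition symmx_fun {R : realType} {n : nat} (f : R -> 'M[R]_n) : Prop :=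
  forall t, symmx (f t).

Definition C1mx {R : realType} {m n : nat} (f : R -> 'M[R]_(m, n)) : Prop :=
  (forall t : R, derivable f t 1) /\ continuous (fun t : R => 'D_1 f t).

Definition dotv {R : realType} {n : nat} (u v : 'cV[R]_n) : R :=
  \sum_(i < n) u i 0 * v i 0.
Definition enorm {R : realType} {n : nat} (v : 'cV[R]_n) : R :=
  Num.sqrt (dotv v v).

Definition F2 {R : realType} {n : nat} (P Q Rm : R -> 'M[R]_n) (C1 C2 C3 : R)
  : Prop :=
  [/\ cvg (P x @[x --> +oo]) /\ cvg (P x @[x --> -oo]),
      cvg (Q x @[x --> +oo]) /\ cvg (Q x @[x --> -oo]),
      cvg (Rm x @[x --> +oo]) /\ cvg (Rm x @[x --> -oo]) &
      forall (t : R) (v : 'cV[R]_n),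
        [/\ dotv (P t *m v) v >= C1 * enorm v ^+ 2,
            enorm (P t *m v) >= C1 * enorm v,
            enorm (Q t *m v) <= C2 * enorm v &
            enorm (Rm t *m v) <= C3 * enorm v]].

Definition Jmx {R : realType} (n : nat) : 'M[R]_(n + n) :=
  block_mx 0 (- 1%:M) 1%:M 0.

Definition Bmx {R : realType} {n : nat} (P Q Rm : R -> 'M[R]_n) (lam t : R)
  : 'M[R]_(n + n) :=
  let Pi := invmx (P t) in
  block_mx Pi (- (Pi *m Q t))
           (- ((Q t)^T *m Pi)) ((Q t)^T *m Pi *m Q t - Rm t - lam%:M).

Definition fundsol {R : realType} {n : nat} (P Q Rm : R -> 'M[R]_n) (lam tau : R)
  (gam : R -> 'M[R]_(n + n)) : Prop :=
  gam tau = 1%:M /\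
  forall t : R, is_derive t 1 gam (Jmx n *m Bmx P Q Rm lam t *m gam t).

Definition Es {R : realType} {n : nat} (gam : R -> 'M[R]_(n + n)) :
  set 'cV[R]_(n + n) :=
  [set v : 'cV[R]_(n + n) | (gam t *m v) @[t --> +oo] --> (0 : 'cV[R]_(n + n))].
Definition Eu {R : realType} {n : nat} (gam : R -> 'M[R]_(n + n)) :
  set 'cV[R]_(n + n) :=
  [set v : 'cV[R]_(n + n) | (gam t *m v) @[t --> -oo] --> (0 : 'cV[R]_(n + n))].

(* Main.v *)
Require Import Defs.
From HB Require Import structures.
From mathcomp Require Import all_boot all_order all_algebra.
From mathcomp Require Import all_classical all_reals all_analysis.
From mathcomp Require Import ring lra.
Import Order.TTheory GRing.Theory Num.Theory.
Import numFieldNormedType.Exports.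
Local Open Scope ring_scope.
Local Open Scope classical_set_scope.

Section Alg.
Variable R : realType.

Lemma dotvE n (u w : 'cV[R]_n) : dotv u w = (u^T *m w) 0 0.
Proof. by rewrite /dotv !mxE; apply: eq_bigr => i _; rewrite mxE. Qed.

Lemma dotv_trl n (A : 'M[R]_n) (u w : 'cV[R]_n) :
  dotv (A^T *m u) w = dotv u (A *m w).
Proof. by rewrite !dotvE trmx_mul trmxK mulmxA. Qed.

Lemma dotvC n (u w : 'cV[R]_n) : dotv u w = dotv w u.
Proof. by apply: eq_bigr => i _; rewrite mulrC. Qed.

Lemma dotvDl n (u u' w : 'cV[R]_n) : dotv (u + u') w = dotv u w + dotv u' w.
Proof. by rewrite /dotv -big_split; apply: eq_bigr => i _; rewrite mxE mulrDl. Qed.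

Lemma dotvZl n a (u w : 'cV[R]_n) : dotv (a *: u) w = a * dotv u w.
Proof. by rewrite /dotv mulr_sumr; apply: eq_bigr => i _; rewrite mxE mulrA. Qed.

Lemma dotv_ge0 n (u : 'cV[R]_n) : 0 <= dotv u u.
Proof. by apply: sumr_ge0 => i _; rewrite -expr2 sqr_ge0. Qed.

Lemma enorm_sqr n (u : 'cV[R]_n) : enorm u ^+ 2 = dotv u u.
Proof. by rewrite /enorm sqr_sqrtr // dotv_ge0. Qed.

Lemma enorm_ge0 n (u : 'cV[R]_n) : 0 <= enorm u.
Proof. exact: sqrtr_ge0. Qed.

Lemma dotv_eq0 n (u : 'cV[R]_n) : dotv u u = 0 -> u = 0.
Proof.
move=> /eqP; rewrite /dotv psumr_eq0; last by move=> i _; rewrite -expr2 sqr_ge0.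
move=> /allP H; apply/matrixP => i j; rewrite (ord1 j) mxE.
have := H i (mem_index_enum _); rewrite /= mulf_eq0 orbb => /eqP //.
Qed.

Lemma enorm_eq0 n (u : 'cV[R]_n) : enorm u = 0 -> u = 0.
Proof. by move=> h; apply: dotv_eq0; rewrite -enorm_sqr h expr0n. Qed.

Lemma dotv0l n (w : 'cV[R]_n) : dotv 0 w = 0.
Proof. by rewrite /dotv big1 // => i _; rewrite mxE mul0r. Qed.

Lemma dotv_CS n (u w : 'cV[R]_n) : - (enorm u * enorm w) <= dotv u w.
Proof.
set a := enorm u; set b := enorm w.
have a0 : 0 <= a by apply: enorm_ge0.
have b0 : 0 <= b by apply: enorm_ge0.
have H : 0 <= dotv (b *: u + a *: w) (b *: u + a *: w).
  exact: dotv_ge0.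
rewrite dotvDl !dotvZl ![dotv _ (_ + _)]dotvC !dotvDl !dotvZl in H.
rewrite [dotv w u]dotvC -!enorm_sqr -/a -/b in H.
have [ab0|] := ltP 0 (a * b).
  by nra.
move=> ab; have : a * b = 0 by apply/le_anti; rewrite ab mulr_ge0.
move/eqP; rewrite mulf_eq0 => /orP[] /eqP h.
  by rewrite (@enorm_eq0 _ _ h) dotv0l h mul0r oppr0.
by rewrite dotvC (@enorm_eq0 _ _ h) dotv0l h mulr0 oppr0.
Qed.


Lemma zm (V : zmodType) (a b c d : V) : -(-a + (b - c - d)) = a - b + c + d.
Proof. by rewrite opprD opprK !opprB [d + _]addrC !addrA [a + c - b]addrAC. Qed.

Lemma unit_of_bound n (P : 'M[R]_n) C1 :
  0 < C1 -> (forall v : 'cV[R]_n, C1 * enorm v <= enorm (P *m v)) -> P \in unitmx.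
Proof.
move=> C10 H; rewrite -unitmx_tr -row_free_unit -kermx_eq0.
apply/negPn/negP => /rowV0Pn [r /sub_kermxP hr rn0].
have Pv : P *m r^T = 0 by rewrite -[P]trmxK -trmx_mul hr trmx0.
have := H r^T; rewrite Pv /enorm dotv0l sqrtr0 => h.
have : enorm r^T = 0.
  apply/le_anti; rewrite enorm_ge0 andbT.
  by rewrite -(pmulr_rle0 _ C10).
move/enorm_eq0 => /(congr1 trmx); rewrite trmxK trmx0 => r0.
by move: rn0; rewrite r0 eqxx.
Qed.

Lemma key n (P Q Rm : R -> 'M[R]_n) lam C1 C2 C3 t (Z : 'cV[R]_(n+n)) :
  0 < C1 -> P t \in unitmx ->
  (forall v, C1 * enorm v ^+ 2 <= dotv (P t *m v) v) ->
  (forall v, enorm (Q t *m v) <= C2 * enorm v) ->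
  (forall v, enorm (Rm t *m v) <= C3 * enorm v) ->
  2 * C2 ^+ 2 / C1 + C3 <= lam ->
  usubmx Z = P t *m dsubmx (Jmx n *m Bmx P Q Rm lam t *m Z) + Q t *m dsubmx Z /\
  C1 / 2 * dotv (dsubmx (Jmx n *m Bmx P Q Rm lam t *m Z)) (dsubmx (Jmx n *m Bmx P Q Rm lam t *m Z))
   <= dotv (usubmx (Jmx n *m Bmx P Q Rm lam t *m Z)) (dsubmx Z)
      + dotv (usubmx Z) (dsubmx (Jmx n *m Bmx P Q Rm lam t *m Z)).
Proof.
move=> C10 Pu HP HQ HR Hlam.
set Zd := Jmx n *m _ *m Z.
set X := usubmx Z; set Y := dsubmx Z.
have eZ : Z = col_mx X Y by rewrite vsubmxK.
have eZd : Zd = col_mx (-( - ((Q t)^T *m invmx (P t)) *m X + ((Q t)^T *m invmx (P t) *m Q t - Rm t - lam%:M) *m Y)) (invmx (P t) *m X + - (invmx (P t) *m Q t) *m Y).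
  by rewrite /Zd /Jmx /Bmx -mulmxA eZ mul_block_col (mul_block_col (0 : 'M[R]_n)) !mul0mx mulNmx !mul1mx add0r addr0.
set Yd := dsubmx Zd.
have eYd : Yd = invmx (P t) *m (X - Q t *m Y).
  by rewrite /Yd eZd col_mxKd mulmxBr mulNmx mulmxA.
have hX : X = P t *m Yd + Q t *m Y.
  by rewrite eYd mulmxA mulmxV // mul1mx subrK.
have hXd : usubmx Zd = (Q t)^T *m Yd + Rm t *m Y + lam *: Y.
  rewrite eZd col_mxKu eYd mulmxBr !mulmxA !mulNmx !mulmxBl mul_scalar_mx.
  by rewrite mulmxBr !mulmxA; apply: zm.
split => //.
have -> : dotv (usubmx Zd) Y + dotv X Yd = dotv (Q t *m Y) Yd * 2
    + dotv (Rm t *m Y) Y + lam * dotv Y Y + dotv (P t *m Yd) Yd.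
  rewrite hXd [X in dotv X Yd]hX !dotvDl dotvZl dotv_trl [dotv Yd _]dotvC.
  by ring.
set a := enorm Y; set b := enorm Yd.
have a0 : 0 <= a by apply: enorm_ge0.
have b0 : 0 <= b by apply: enorm_ge0.
have hP := HP Yd; rewrite -/b in hP.
have hq1 := dotv_CS _ (Q t *m Y) Yd; rewrite -/b in hq1.
have hq2 : enorm (Q t *m Y) * b <= C2 * a * b by apply: ler_wpM2r => //; apply: HQ.
have hr1 := dotv_CS _ (Rm t *m Y) Y; rewrite -/a in hr1.
have hr2 : enorm (Rm t *m Y) * a <= C3 * a * a by apply: ler_wpM2r => //; apply: HR.
rewrite -!enorm_sqr -/a -/b.
set k := C2 / C1.
have eC2 : C2 = k * C1 by rewrite /k divfK // gt_eqF.
have el : 2 * C2 ^+ 2 / C1 + C3 = 2 * k ^+ 2 * C1 + C3.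
  by rewrite eC2; field; rewrite gt_eqF.
rewrite el in Hlam.
have hl : (2 * k ^+ 2 * C1 + C3) * a ^+ 2 <= lam * a ^+ 2 by apply: ler_wpM2r => //; apply: sqr_ge0.
have hsq : 0 <= C1 * (b - 2 * k * a) ^+ 2 by apply: mulr_ge0; [apply: ltW | apply: sqr_ge0].
rewrite eC2 in hq2.
nra.
Qed.


Lemma entry_derive (m p : nat) (F : R -> 'M[R]_(m,p)) (t : R) dF i j :
  is_derive t 1 F dF -> is_derive t 1 (fun s => F s i j) (dF i j).
Proof.
move=> hF.
have hd : derivable F t 1 by case: hF.
apply: DeriveDef; first exact: ((derivable_mxP F t 1).1 hd i j).
have := derive_mx hd; rewrite derive_val => ->.
by rewrite mxE.
Qed.

Lemma col_derive (m p : nat) (gam : R -> 'M[R]_(m, p)) G (t : R) (v : 'cV[R]_p) :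
  is_derive t 1 gam G -> is_derive t 1 (fun s => gam s *m v) (G *m v).
Proof.
move=> hg.
have E i j : is_derive t 1 (fun s => (gam s *m v) i j) ((G *m v) i j).
  have -> : (fun s => (gam s *m v) i j) =
      \sum_(k < p) (v k j *: (fun s => gam s i k)).
    rewrite fct_sumE; apply/funext => s; rewrite mxE.
    by apply: eq_bigr => k _ /=; rewrite mulrC.
  have -> : (G *m v) i j = \sum_(k < p) v k j *: G i k.
    by rewrite mxE; apply: eq_bigr => k _; rewrite mulrC.
  apply: is_derive_sum => k.
  apply: is_deriveZ.
  exact: entry_derive.
apply: DeriveDef.
  apply/(derivable_mxP _ t 1) => i j.
  exact: (@ex_derive _ _ _ _ _ _ _ (E i j)).
rewrite derive_mx; last first.
  apply/(derivable_mxP _ t 1) => i j.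
  exact: (@ex_derive _ _ _ _ _ _ _ (E i j)).
by apply/matrixP => i j; rewrite mxE; case: (E i j).
Qed.

Lemma f_derive n (Z : R -> 'cV[R]_(n + n)) dZ (t : R) :
  is_derive t 1 Z dZ ->
  is_derive t 1 (fun s => dotv (usubmx (Z s)) (dsubmx (Z s)))
    (dotv (usubmx dZ) (dsubmx (Z t)) + dotv (usubmx (Z t)) (dsubmx dZ)).
Proof.
move=> hZ.
have -> : (fun s => dotv (usubmx (Z s)) (dsubmx (Z s))) =
   \sum_(i < n) ((fun s => Z s (lshift n i) 0) * (fun s => Z s (rshift n i) 0)).
  rewrite fct_sumE; apply/funext => s; rewrite /dotv.
  by apply: eq_bigr => i _; rewrite !mxE.
have -> : dotv (usubmx dZ) (dsubmx (Z t)) + dotv (usubmx (Z t)) (dsubmx dZ) =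
   \sum_(i < n) (Z t (lshift n i) 0 *: dZ (rshift n i) 0 + Z t (rshift n i) 0 *: dZ (lshift n i) 0).
  rewrite /dotv -big_split /=; apply: eq_bigr => i _.
  by rewrite !mxE addrC; congr (_ + _); rewrite mulrC.
apply: is_derive_sum => i.
apply: is_deriveM; exact: entry_derive.
Qed.


Lemma sum_cvg0 (I : Type) (r : seq I) (h : I -> R -> R) (F : set_system R) {FF : Filter F} :
  (forall i, h i @ F --> 0) -> (\sum_(i <- r) h i) @ F --> 0.
Proof.
move=> H; elim: r => [|a r IH].
  by rewrite big_nil; apply: cvg_cst.
rewrite big_cons; have := cvgD (H a) IH; rewrite addr0; apply.
Qed.

Lemma f_lim n (Z : R -> 'cV[R]_(n + n)) (F : set_system R) {FF : Filter F} :
  Z t @[t --> F] --> (0 : 'cV[R]_(n + n)) ->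
  dotv (usubmx (Z t)) (dsubmx (Z t)) @[t --> F] --> 0.
Proof.
move=> hZ.
have E k : (fun t => Z t k 0) @ F --> 0.
  have := cvg_comp Z (fun M : 'cV[R]_(n + n) => M k 0) hZ (@coord_continuous R (n + n) 1 k 0 0).
  by rewrite mxE.
have -> : (fun s => dotv (usubmx (Z s)) (dsubmx (Z s))) =
   \sum_(i < n) ((fun s => Z s (lshift n i) 0) * (fun s => Z s (rshift n i) 0)).
  rewrite fct_sumE; apply/funext => s; rewrite /dotv.
  by apply: eq_bigr => i _; rewrite !mxE.
apply: sum_cvg0 => i.
have := cvgM (E (lshift n i)) (E (rshift n i)); rewrite mulr0; apply.
Qed.


Definition Zf {n} (gam : R -> 'M[R]_(n + n)) (v : 'cV[R]_(n + n)) t := gam t *m v.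
Definition ff {n} (gam : R -> 'M[R]_(n + n)) (v : 'cV[R]_(n + n)) t :=
  dotv (usubmx (gam t *m v)) (dsubmx (gam t *m v)).
Definition Zdf {n} (P Q Rm : R -> 'M[R]_n) lam (gam : R -> 'M[R]_(n + n)) (v : 'cV[R]_(n + n)) t :=
  Jmx n *m Bmx P Q Rm lam t *m (gam t *m v).
Definition dff {n} (P Q Rm : R -> 'M[R]_n) lam (gam : R -> 'M[R]_(n + n)) (v : 'cV[R]_(n + n)) t :=
  dotv (usubmx (Zdf P Q Rm lam gam v t)) (dsubmx (gam t *m v))
  + dotv (usubmx (gam t *m v)) (dsubmx (Zdf P Q Rm lam gam v t)).

Lemma traj n (P Q Rm : R -> 'M[R]_n) C1 C2 C3 lam s (gam : R -> 'M[R]_(n + n)) (v : 'cV[R]_(n + n)) :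
  0 < C1 -> F2 P Q Rm C1 C2 C3 -> 2 * C2 ^+ 2 / C1 + C3 <= lam ->
  fundsol P Q Rm lam s gam ->
  [/\ forall t : R, is_derive t 1 (Zf gam v) (Zdf P Q Rm lam gam v t),
      forall t : R, is_derive t 1 (ff gam v) (dff P Q Rm lam gam v t),
      forall t, C1 / 2 * dotv (dsubmx (Zdf P Q Rm lam gam v t)) (dsubmx (Zdf P Q Rm lam gam v t))
                <= dff P Q Rm lam gam v t,
      forall t, usubmx (gam t *m v) = P t *m dsubmx (Zdf P Q Rm lam gam v t) + Q t *m dsubmx (gam t *m v) &
      forall x y, x <= y -> ff gam v x <= ff gam v y].
Proof.
move=> C10 [_ _ _ H] hlam [_ hder].
have hZ (t : R) : is_derive t 1 (Zf gam v) (Zdf P Q Rm lam gam v t).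
  rewrite /Zdf mulmxA; exact: col_derive.
have hf (t : R) : is_derive t 1 (ff gam v) (dff P Q Rm lam gam v t).
  by move: (f_derive _ _ _ _ (hZ t)); rewrite /Zf /ff /dff.
have hk t := @key n P Q Rm lam C1 C2 C3 t (gam t *m v) C10
   (@unit_of_bound n (P t) C1 C10 (fun w => let: And4 _ h _ _ := H t w in h))
   (fun w => let: And4 h _ _ _ := H t w in h)
   (fun w => let: And4 _ _ h _ := H t w in h)
   (fun w => let: And4 _ _ _ h := H t w in h) hlam.
have hge t : 0 <= dff P Q Rm lam gam v t.
  case: (hk t) => _ h; apply: le_trans h.
  by apply: mulr_ge0; [apply: divr_ge0; [apply: ltW|] | apply: dotv_ge0].
split => //; [by move=> t; case: (hk t) | by move=> t; case: (hk t)|].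
move=> x y xy.
apply: (@ger0_derive1_ndecr _ _ x y) => //.
- by move=> z _; rewrite derive1E; case: (hf z) => _ ->.
- apply: continuous_subspaceT => z.
  apply: differentiable_continuous; apply/derivable1_diffP.
  by case: (hf z).
Qed.

End Alg.
Arguments Zf {R n}. Arguments ff {R n}. Arguments Zdf {R n}. Arguments dff {R n}.

Theorem lemma3p8 (R : realType) (n : nat) (P Q Rm : R -> 'M[R]_n)
  (C1 C2 C3 : R) :
  symmx_fun P -> symmx_fun Rm -> C1mx P -> C1mx Q -> C1mx Rm ->
  0 < C1 -> F2 P Q Rm C1 C2 C3 ->
  forall (tau lam : R), 0 <= tau -> lam >= 2 * C2 ^+ 2 / C1 + C3 ->
  forall gm gp : R -> 'M[R]_(n + n),
    fundsol P Q Rm lam (- tau) gm -> fundsol P Q Rm lam tau gp ->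
    Eu gm `&` Es gp = [set 0].
Proof.
move=> _ _ _ _ _ C10 hF tau lam tau0 hlam gm gp hm hp.
apply/seteqP; split => v; last first.
  move=> -> /=; rewrite /Eu /Es /=.
  have -> : (fun t => gm t *m 0) = fun=> (0 : 'cV[R]_(n + n)) by apply: funext => t; rewrite mulmx0.
  have -> : (fun t => gp t *m 0) = fun=> (0 : 'cV[R]_(n + n)) by apply: funext => t; rewrite mulmx0.
  by split; apply: cvg_cst.
case=> hu hs.
have [hZm hfm hkm hXm monm] := @traj R n P Q Rm C1 C2 C3 lam (- tau) gm v C10 hF hlam hm.
have [_ _ _ _ monp] := @traj R n P Q Rm C1 C2 C3 lam tau gp v C10 hF hlam hp.
have e1 : ff gm v (- tau) = ff gp v tau.
  by rewrite /ff hm.1 hp.1 !mul1mx.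
have L2 : ff gp v t @[t --> +oo] --> 0 by apply: f_lim.
have L1 : ff gm v t @[t --> -oo] --> 0 by apply: f_lim.
have f2le : ff gp v tau <= 0.
  have l2 : lim (ff gp v t @[t --> +oo]) = 0.
    by apply: cvg_lim L2; exact: norm_hausdorff.
  rewrite -l2.
  apply: limr_ge; first exact: cvgP L2.
  near=> t; apply: monp; near: t; apply: nbhs_pinfty_ge; exact: num_real.
have f1ge t : 0 <= ff gm v t.
  have l1 : lim (ff gm v t @[t --> -oo]) = 0.
    by apply: cvg_lim L1; exact: norm_hausdorff.
  rewrite -l1.
  apply: limr_le; first exact: cvgP L1.
  near=> s; apply: monm; near: s. apply: nbhs_ninfty_le; exact: num_real.
have f1zero t : t <= - tau -> ff gm v t = 0.
  move=> tt; apply/le_anti; rewrite f1ge andbT.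
  by apply: (le_trans (monm _ _ tt)); rewrite e1.
have Yd0 t : t < - tau -> dsubmx (Zdf P Q Rm lam gm v t) = 0.
  move=> tt.
  have d0 : is_derive t 1 (ff gm v) 0.
    apply: (@near_eq_is_derive _ _ _ (cst (0 : R))).
    near=> s; rewrite /= f1zero //; apply: ltW; near: s; exact: lt_nbhsl.
  have ed : dff P Q Rm lam gm v t = 0.
    by case: (hfm t) => _ <-; case: d0.
  have := hkm t; rewrite ed pmulr_rle0; last by apply: divr_gt0.
  move=> h; apply: dotv_eq0; apply/le_anti; rewrite h dotv_ge0.
  done.
have Y0 t : t < - tau -> dsubmx (gm t *m v) = 0.
  move=> tt; apply/matrixP => i j; rewrite (ord1 j).
  rewrite [RHS]mxE [LHS]mxE.
  set y := fun s => (gm s *m v) (rshift n i) 0.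
  have hy (s : R) : is_derive s 1 y (Zdf P Q Rm lam gm v s (rshift n i) 0).
    exact: (@entry_derive R _ _ _ _ _ (rshift n i) 0 (hZm s)).
  have dy0 s : s < - tau -> Zdf P Q Rm lam gm v s (rshift n i) 0 = 0.
    move=> st; have := Yd0 s st => /matrixP /(_ i 0); rewrite !mxE.
    done.
  have yc s : s <= t -> y s = y t.
    move=> st.
    have cy : {within `[s, t], continuous y}.
      apply: continuous_subspaceT => x; apply: differentiable_continuous.
      by apply/derivable1_diffP; case: (hy x).
    have [c cst' ec] := MVT_segment st (fun x _ => hy x) cy.
    apply/eqP; rewrite eq_sym -subr_eq0 ec dy0 ?mul0r //.
    by apply: (le_lt_trans _ tt); move: cst'; rewrite in_itv /= => /andP[].
  have ly : y s @[s --> -oo] --> 0.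
    have := cvg_comp (fun s => gm s *m v) (fun M : 'cV[R]_(n + n) => M (rshift n i) 0) hu
       (@coord_continuous R (n + n) 1 (rshift n i) 0 0).
    by rewrite mxE.
  have ly' : y s @[s --> -oo] --> y t.
    apply: cvg_trans (cvg_cst (y t)).
    apply: near_eq_cvg.
    near=> s; apply/esym/yc.
    near: s; apply: nbhs_ninfty_le; exact: num_real.
    exact: _.
  exact: (cvg_unique _ ly' ly).
have Z0 t : t < - tau -> gm t *m v = 0.
  move=> tt.
  have X0 : usubmx (gm t *m v) = 0 by rewrite hXm Yd0 // Y0 // !mulmx0 addr0.
  by rewrite -[gm t *m v]vsubmxK X0 Y0 // col_mx0.
have ev : v = Zf gm v (- tau) by rewrite /Zf hm.1 mul1mx.
have cZ : Zf gm v s @[s --> (- tau)^'-] --> Zf gm v (- tau).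
  apply: cvg_at_left_filter; apply: differentiable_continuous.
  by apply/derivable1_diffP; case: (hZm (- tau)).
have cZ0 : Zf gm v s @[s --> (- tau)^'-] --> (0 : 'cV[R]_(n + n)).
  apply: cvg_trans (cvg_cst (0 : 'cV[R]_(n + n))).
  apply: near_eq_cvg; near=> s; apply/esym; rewrite /Zf; apply: Z0.
  near: s; exact: nbhs_left_lt.
  exact: _.
rewrite /= ev; exact: (cvg_unique _ cZ cZ0).
Unshelve. all: by end_near.
Qed.
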